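(* Under the standing assumptions stated in the context, $\lim_{\beta\to\infty}\mu_\beta(\check{\mathcal S}(0))/\mu_\beta(\mathcal S)=1$, where $\check{\mathcal S}(0)=\{\sigma\in\mathcal S:\mathrm{supp}[\sigma]\cap B_{L_\beta,L_\beta}(0)=\emptyset\}$.
   Context: Kawasaki setting. Fix $U>0$ and $\Delta$ with $U<\Delta<2U$ and $U/(2U-\Delta)\notin\mathbb N$; $\ell_c=\lceil U/(2U-\Delta)\rceil$. $\Lambda_\beta\subset\mathbb Z^2$: square box of odd side length centred at the origin with periodic boundary conditions. $\rho_\beta=e^{-\beta\Delta}$, $n_\beta=\lceil\rho_\beta|\Lambda_\beta|\rceil$. Assume $|\Lambda_\beta|\rho_\beta\to\infty$ and $|\Lambda_\beta|e^{-\beta\Gamma}\to0$, where $\Gamma=-U\,b+\Delta[\ell_c(\ell_c-1)+2]$ and $b$ is the number of nearest-neighbour pairs inside a proto-critical droplet (a set of $\ell_c(\ell_c-1)+1$ sites forming either an $(\ell_c-2)\times(\ell_c-2)$ square with four bars on its sides of total length $3\ell_c-3$, or an $(\ell_c-1)\times(\ell_c-3)$ rectangle with four bars of total length $3\ell_c-2$). $\mathcal X_\beta^{(m)}=\{\sigma\in\{0,1\}^{\Lambda_\beta}:|\mathrm{supp}[\sigma]|=m\}$. $H_\beta(\sigma)=-U\sum_{\{x,y\}}\sigma(x)\sigma(y)$ (unordered nearest-neighbour pairs); canonical Gibbs measure $\mu_\beta=e^{-\beta H_\beta}/Z_\beta^{(n_\beta)}$ on $\mathcal X_\beta^{(n_\beta)}$.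 $L_\beta$ odd with $L_\beta^2=e^{(\Delta-\delta_\beta)\beta}$, $\delta_\beta\to0$, $\beta\delta_\beta\to\infty$; $B_{L,L}(x)$: square box of side $L$ centred at $x$. $\mathcal S=\{\sigma\in\mathcal X_\beta^{(n_\beta)}:|\mathrm{supp}[\sigma]\cap B_{L_\beta,L_\beta}(x)|\le\ell_c(\ell_c-1)+1\ \forall x\in\Lambda_\beta\}$. *)

(* Defs.v *)
From mathcomp Require Import all_boot.
From Stdlib Require Import Reals.

Set Implicit Arguments.
Unset Strict Implicit.
Unset Printing Implicit Defensive.

Definition Rceil (x : R) : Z := (1 - up (- x))%Z.

Definition lc (U Delta : R) : nat := Z.to_nat (Rceil (U / (2 * U - Delta))%R).

(* number of nearest-neighbour pairs inside a proto-critical droplet with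
   parameter l = l_c : both shapes are orthogonally convex polyominoes of
   area l(l-1)+1 whose bounding box has semi-perimeter 2l, hence perimeter 4l,
   so the number of internal bonds is (4 (l(l-1)+1) - 4l)/2 = 2 (l-1)^2. *)
Definition bpairs (l : nat) : nat := (2 * (l - 1) ^ 2)%N.

Definition Gamma (U Delta : R) : R :=
  (- U * INR (bpairs (lc U Delta))
   + Delta * INR (lc U Delta * (lc U Delta - 1) + 2))%R.

Definition tends_to (f : R -> R) (l : R) : Prop :=
  forall eps : R, (0 < eps)%R ->
    exists B : R, forall beta : R, (B < beta)%R -> (Rabs (f beta - l) < eps)%R.
Definition tends_to_infty (f : R -> R) : Prop :=
  forall M : R, exists B : R, forall beta : R, (B < beta)%R -> (M < f beta)%R.

(* the discrete torus Lambda of side N (odd), sites with coordinates mod N;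
   the origin is the site (0,0) *)
Definition site (N : nat) : finType := ('I_N * 'I_N)%type.

Definition tdist (N a b : nat) : nat :=
  minn ((a + N - b) %% N) ((b + N - a) %% N).

Definition nn (N : nat) (x y : site N) : bool :=
  (x != y) &&
  (((x.1 == y.1) && (tdist N x.2 y.2 == 1)) ||
   ((x.2 == y.2) && (tdist N x.1 y.1 == 1))).

(* number of unordered nearest-neighbour pairs {x,y} inside s
   (ordered pairs counted, divided by 2; nn is symmetric and irreflexive) *)
Definition npairs (N : nat) (s : {set site N}) : nat :=
  #|[set p : site N * site N | [&& p.1 \in s, p.2 \in s & nn p.1 p.2]]| %/ 2.

Definition Ham (U : R) (N : nat) (s : {set site N}) : R := (- U * INR (npairs s))%R.

Definition box (N L a b : nat) : {set site N} :=
  [set y : site N | (tdist N a y.1 <= (L - 1)./2) && (tdist N b y.2 <= (L - 1)./2)].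

Definition gibbs (beta U : R) (N n : nat) (A : {set {set site N}}) : R :=
  ((\big[Rplus/0%R]_(s in A | #|s| == n) exp (- beta * Ham U s))
   / (\big[Rplus/0%R]_(s : {set site N} | #|s| == n) exp (- beta * Ham U s)))%R.

Definition nbeta (Delta beta : R) (N : nat) : nat :=
  Z.to_nat (Rceil (exp (- beta * Delta) * INR (N * N))%R).

Definition Sset (U Delta : R) (N L n : nat) : {set {set site N}} :=
  [set s : {set site N} | (#|s| == n) &&
     [forall x : site N,
        #|s :&: box N L x.1 x.2| <= lc U Delta * (lc U Delta - 1) + 1]].

Definition Scheck0 (U Delta : R) (N L n : nat) : {set {set site N}} :=
  [set s in Sset U Delta N L n | s :&: box N L 0 0 == set0].

Arguments box : clear implicits.
Arguments Sset : clear implicits.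
Arguments Scheck0 : clear implicits.
Arguments gibbs beta U {N} n A.

(* Main.v *)
From HB Require Import structures.
Require Import Defs.
From mathcomp Require Import all_boot.
From Stdlib Require Import Reals Lia Lra ZArith.

Definition dd (N a b : nat) := ((a + N - b) %% N)%N.

Lemma dd_mod N a b : b < N -> dd N a b + b = a %[mod N].
Proof.
move=> hb; rewrite /dd modnDml subnK; last by apply: leq_trans (ltnW hb) (leq_addl _ _).
by rewrite modnDr.
Qed.

Lemma mod_eq_small N x y : x < N -> y < N -> x = y %[mod N] -> x = y.
Proof. by move=> hx hy; rewrite !modn_small. Qed.

Lemma dd_lt N a b : 0 < N -> dd N a b < N.
Proof. by move=> h; rewrite /dd ltn_pmod. Qed.

Lemma dd_uniq N a b x : b < N -> x < N -> x + b = a %[mod N] -> x = dd N a b.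
Proof.
move=> hb hx h; apply: (@mod_eq_small N) => //; first by apply: dd_lt; apply: leq_ltn_trans (leq0n _) hb.
apply/eqP; rewrite -(eqn_modDr b) dd_mod // h //.
Qed.

Lemma dd_shift N a b v : 0 < N -> b < N ->
  dd N ((a + v) %% N) ((b + v) %% N) = dd N a b.
Proof.
move=> hN hb; symmetry; apply: (@dd_uniq N); [exact: ltn_pmod|exact: dd_lt|].
rewrite modnDmr addnA -modnDml (@dd_mod N a b hb) modnDml modn_mod //.
Qed.

Lemma tdist_shift N a b v : 0 < N -> a < N -> b < N ->
  tdist N ((a + v) %% N) ((b + v) %% N) = tdist N a b.
Proof.
move=> hN ha hb; rewrite /tdist.
by have := @dd_shift N a b v hN hb; have := @dd_shift N b a v hN ha; rewrite /dd => -> ->.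
Qed.

Set Implicit Arguments. Unset Strict Implicit.

Definition sho (N : nat) (hN : 0 < N) (v : nat) (a : 'I_N) : 'I_N :=
  Ordinal (ltn_pmod (a + v) hN).
Definition sh (N : nat) (hN : 0 < N) (v : nat * nat) (y : site N) : site N :=
  (sho hN v.1 y.1, sho hN v.2 y.2).

Lemma sho_inj N (hN : 0 < N) v : injective (sho hN v).
Proof.
move=> a b /(congr1 val) /= h; apply: val_inj.
apply: (@mod_eq_small N); [exact: ltn_ord|exact: ltn_ord|].
by apply/eqP; rewrite -(eqn_modDr v) h.
Qed.

Lemma sh_inj N (hN : 0 < N) v : injective (sh hN v).
Proof.
move=> [a1 a2] [b1 b2] h.
have h1 : sho hN v.1 a1 = sho hN v.1 b1 := congr1 fst h.
have h2 : sho hN v.2 a2 = sho hN v.2 b2 := congr1 snd h.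
by rewrite (sho_inj h1) (sho_inj h2).
Qed.

Lemma shoK N (hN : 0 < N) c (a : 'I_N) : c <= N -> sho hN (N - c) (sho hN c a) = a.
Proof.
move=> hc; apply: val_inj => /=.
by rewrite modnDml -addnA subnKC // modnDr modn_small.
Qed.

Lemma shoK' N (hN : 0 < N) c (a : 'I_N) : c <= N -> sho hN c (sho hN (N - c) a) = a.
Proof.
move=> hc; apply: val_inj => /=.
by rewrite modnDml -addnA subnK // modnDr modn_small.
Qed.

Definition cinv N (c : site N) : nat * nat := (N - c.1, N - c.2).
Definition cv N (c : site N) : nat * nat := (nat_of_ord c.1, nat_of_ord c.2).

Lemma shK N (hN : 0 < N) (c : site N) y : sh hN (cinv c) (sh hN (cv c) y) = y.
Proof.
case: y => a b; rewrite /sh /= !shoK //; exact: ltnW.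
Qed.

Lemma shK' N (hN : 0 < N) (c : site N) y : sh hN (cv c) (sh hN (cinv c) y) = y.
Proof.
case: y => a b; rewrite /sh /= !shoK' //; exact: ltnW.
Qed.

Lemma nn_sh N (hN : 0 < N) v x y : nn (sh hN v x) (sh hN v y) = nn x y.
Proof.
rewrite /nn (eqtype.inj_eq (@sh_inj N hN v)) /sh /=.
rewrite !(eqtype.inj_eq (@sho_inj N hN _)) /=.
by rewrite !tdist_shift.
Qed.

Lemma box_sh N (hN : 0 < N) L v (x z : site N) :
  (sh hN v z \in box N L (sh hN v x).1 (sh hN v x).2) = (z \in box N L x.1 x.2).
Proof.
by rewrite /box !inE /sh /= !tdist_shift.
Qed.


Lemma card_inj_le (T : finType) (f : T -> nat) r :
  injective f -> #|[set a | f a <= r]| <= r.+1.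
Proof.
move=> hf; rewrite cardE -(size_map f) -(size_iota 0 r.+1).
apply: uniq_leq_size; first by rewrite (map_inj_uniq hf) enum_uniq.
move=> z /mapP [a]; rewrite mem_enum inE => ha ->.
by rewrite mem_iota add0n ltnS.
Qed.

Lemma dd1_inj N (c : 'I_N) : injective (fun a : 'I_N => dd N a c).
Proof.
move=> a b h; apply: val_inj; apply: (@mod_eq_small N); [exact: ltn_ord|exact: ltn_ord|].
by rewrite -(@dd_mod N a c (ltn_ord c)) -(@dd_mod N b c (ltn_ord c)) /= h.
Qed.

Lemma dd2_inj N (c : 'I_N) : injective (fun a : 'I_N => dd N c a).
Proof.
move=> a b h; apply: val_inj; apply: (@mod_eq_small N); [exact: ltn_ord|exact: ltn_ord|].
apply/eqP; rewrite -(eqn_modDl (dd N c a)); apply/eqP.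
rewrite (@dd_mod N c a (ltn_ord a)) /= h (@dd_mod N c b (ltn_ord b)) //.
Qed.

Lemma card_tdist N (c : 'I_N) r :
  #|[set a : 'I_N | tdist N a c <= r]| <= r.+1 + r.+1.
Proof.
apply: (@leq_trans #|[set a : 'I_N | dd N a c <= r] :|: [set a : 'I_N | dd N c a <= r]|).
  apply: subset_leq_card; apply/subsetP => a; rewrite !inE /tdist geq_min //.
apply: leq_trans (leq_card_setU _ _).1 _.
by apply: leq_add; apply: card_inj_le; [exact: dd1_inj|exact: dd2_inj].
Qed.

Lemma card_boxpre N L (y : site N) :
  #|[set x : site N | y \in box N L x.1 x.2]| <=
     ((L - 1)./2).+1.*2 * ((L - 1)./2).+1.*2.
Proof.
set r := (L - 1)./2.
have -> : [set x : site N | y \in box N L x.1 x.2] =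
   setX [set a : 'I_N | tdist N a y.1 <= r] [set a : 'I_N | tdist N a y.2 <= r].
  by apply/setP => x; rewrite !inE.
by rewrite cardsX -!addnn; apply: leq_mul; apply: card_tdist.
Qed.

Lemma card_bigcup_le (T T' : finType) (s : {set T}) (F : T -> {set T'}) :
  #|\bigcup_(y in s) F y| <= \sum_(y in s) #|F y|.
Proof.
elim/big_rec2: _ => [|i U n _ h]; first by rewrite cards0. apply: leq_trans (leq_card_setU _ _).1 _.
by rewrite leq_add2l.
Qed.

Lemma card_hit N L (s : {set site N}) :
  #|[set x : site N | s :&: box N L x.1 x.2 != set0]| <=
    #|s| * (((L - 1)./2).+1.*2 * ((L - 1)./2).+1.*2).
Proof.
apply: (@leq_trans #|\bigcup_(y in s) [set x : site N | y \in box N L x.1 x.2]|).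
  apply: subset_leq_card; apply/subsetP => x; rewrite inE => /set0Pn [y].
  rewrite inE => /andP [ys yb]; apply/bigcupP; exists y => //; by rewrite inE.
apply: leq_trans (card_bigcup_le _ _) _.
rewrite -sum1_card big_distrl /=; apply: leq_sum => y _.
by rewrite mul1n card_boxpre.
Qed.


Ltac natify := repeat match goal with
  | H : context [addn ?a ?b] |- _ => rewrite -plusE in H
  | H : context [subn ?a ?b] |- _ => rewrite -minusE in H
  end.

Lemma dd_small N c a : c < N -> a < N ->
  dd N c a = if a <= c then c - a else c + N - a.
Proof.
move=> hc ha; rewrite /dd; case: leqP => h.
  by rewrite addnC -addnBA // addnC modnDr modn_small // (leq_ltn_trans (leq_subr _ _) hc).
rewrite modn_small //.
move/ltP: h => h; move/ltP: hc => hc; apply/ltP; rewrite -!plusE -!minusE; lia.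
Qed.

Lemma tdist_cases N c a r : c < N -> a < N -> tdist N c a <= r ->
  [\/ a <= c /\ c - a <= r, c < a /\ c + N - a <= r,
      c <= a /\ a - c <= r | a < c /\ a + N - c <= r].
Proof.
move=> hc ha; rewrite /tdist geq_min.
have := dd_small hc ha; have := dd_small ha hc; rewrite /dd => -> ->.
case: (leqP a c) => h1; case: (leqP c a) => h2 /orP [] h;
  by [constructor 1|constructor 2|constructor 3|constructor 4].
Qed.

Lemma arith_grid A B c N Q L r : A + L <= B -> B + L <= Q -> Q <= N -> c < N -> r + r < L ->
  [\/ A <= c /\ c - A <= r, c < A /\ c + N - A <= r,
      c <= A /\ A - c <= r | A < c /\ A + N - c <= r] ->
  [\/ B <= c /\ c - B <= r, c < B /\ c + N - B <= r,
      c <= B /\ B - c <= r | B < c /\ B + N - c <= r] -> False.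
Proof.
move=> /leP ? /leP ? /leP ? /ltP ? /ltP ?.
case=> [][/leP ? /leP ?]; case=> [][/leP ? /leP ?]; natify; lia.
Qed.

Lemma grid_same N L q c i j : 0 < L -> q * L <= N -> c < N -> i < q -> j < q ->
  tdist N c (i * L) <= (L - 1)./2 -> tdist N c (j * L) <= (L - 1)./2 -> i = j.
Proof.
move=> hL hq hc hi hj.
have hiN : i * L < N by apply: leq_trans hq; rewrite ltn_pmul2r.
have hjN : j * L < N by apply: leq_trans hq; rewrite ltn_pmul2r.
have hi' : i * L + L <= q * L by rewrite addnC -mulSn leq_mul2r hi orbT.
have hj' : j * L + L <= q * L by rewrite addnC -mulSn leq_mul2r hj orbT.
have hr : (L - 1)./2 + (L - 1)./2 < L.
  rewrite addnn halfK; apply: leq_ltn_trans (leq_subr _ _) _.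
  by move/ltP: hL => hL; apply/ltP; rewrite -minusE; lia.
move=> /(tdist_cases hc hiN) h1 /(tdist_cases hc hjN) h2.
case: (ltngtP i j) => // hij; exfalso.
- have h : i * L + L <= j * L by rewrite addnC -mulSn leq_mul2r hij orbT.
  exact: (arith_grid h hj' hq hc hr h1 h2).
- have h : j * L + L <= i * L by rewrite addnC -mulSn leq_mul2r hij orbT.
  exact: (arith_grid h hi' hq hc hr h2 h1).
Qed.


Lemma sub_card (T : finType) (G : {set T}) n : n <= #|G| ->
  exists B : {set T}, B \subset G /\ #|B| = n.
Proof.
move=> hn; exists [set x in take n (enum G)]; split.
  apply/subsetP => x; rewrite inE => /mem_take; by rewrite mem_enum.
rewrite cardsE (card_uniqP _); last by rewrite take_uniq // enum_uniq.
by rewrite size_takel // -cardE.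
Qed.

Lemma grid_count n q : 4 * n < q.+1 * q.+1 -> n <= q * q.
Proof.
move=> /ltP h; apply/leP; rewrite -!multE in h *; nia.
Qed.

Lemma S_exists N L n : 0 < L -> 4 * n * (L * L) <= N * N ->
  exists s : {set site N}, #|s| = n /\
    forall x : site N, #|s :&: box N L x.1 x.2| <= 1.
Proof.
move=> hL hn.
set q := N %/ L.
have hq : q * L <= N by apply: leq_trunc_div.
have hN : N < q.+1 * L by apply: ltn_ceil.
have hnq : n <= q * q.
  apply: grid_count.
  have h2 : N * N < (q.+1 * L) * (q.+1 * L).
    apply: (@leq_ltn_trans (N * (q.+1 * L))); first by rewrite leq_mul2l ltnW ?orbT.
    by rewrite ltn_pmul2r // (leq_ltn_trans _ hN).
  have h3 : 4 * n * (L * L) < q.+1 * q.+1 * (L * L).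
    apply: leq_ltn_trans hn _; apply: leq_trans h2 _.
    by rewrite mulnCA !mulnA mulnAC.
  by rewrite ltn_pmul2r ?muln_gt0 ?hL in h3.
have hlt : forall i : 'I_q, i * L < N.
  by move=> i; apply: leq_trans hq; rewrite ltn_pmul2r.
pose g := fun p : 'I_q * 'I_q => ((Ordinal (hlt p.1), Ordinal (hlt p.2)) : site N).
have ginj : injective g.
  move=> [i1 i2] [j1 j2] h.
  have /(congr1 val) /= /eqP h1 : (g (i1, i2)).1 = (g (j1, j2)).1 by rewrite h.
  have /(congr1 val) /= /eqP h2 : (g (i1, i2)).2 = (g (j1, j2)).2 by rewrite h.
  rewrite eqn_pmul2r // in h1; rewrite eqn_pmul2r // in h2.
  by rewrite (val_inj (eqP h1)) (val_inj (eqP h2)).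
have : n <= #|g @: setT|.
  by rewrite card_imset // cardsT card_prod card_ord.
case/sub_card => s [hs cs]; exists s; split => // x.
apply/card_le1_eqP => y z; rewrite !in_setI => /andP [ys yb] /andP [zs zb].
move/subsetP: hs => hs; move: yb zb.
case/imsetP: (hs y ys) => [[i1 i2]] _ ->.
case/imsetP: (hs z zs) => [[j1 j2]] _ -> .
rewrite /box !inE /= => /andP [y1 y2] /andP [z1 z2].
have e1 := grid_same hL hq (ltn_ord x.1) (ltn_ord i1) (ltn_ord j1) y1 z1.
have e2 := grid_same hL hq (ltn_ord x.2) (ltn_ord i2) (ltn_ord j2) y2 z2.
by rewrite (val_inj e1) (val_inj e2).
Qed.


Definition T N (hN : 0 < N) (c : site N) (s : {set site N}) : {set site N} :=
  sh hN (cv c) @: s.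

Lemma memT N (hN : 0 < N) c s y : (y \in T hN c s) = (sh hN (cinv c) y \in s).
Proof. rewrite -{1}(shK' hN c y) /T (mem_imset _ _ (@sh_inj _ hN _)). reflexivity. Qed.

Lemma memT' N (hN : 0 < N) c s y : (sh hN (cv c) y \in T hN c s) = (y \in s).
Proof. rewrite /T (mem_imset _ _ (@sh_inj _ hN _)). reflexivity. Qed.

Lemma T_inj N (hN : 0 < N) c : injective (T hN c).
Proof.
move=> s1 s2 h; apply/setP => y. rewrite -(memT' hN c s1 y) -(memT' hN c s2 y) h. reflexivity.
Qed.

Lemma card_T N (hN : 0 < N) c s : #|T hN c s| = #|s|.
Proof. rewrite /T (card_imset _ (@sh_inj _ hN _)). reflexivity. Qed.

Definition pm N (hN : 0 < N) (v : nat * nat) (p : site N * site N) : site N * site N :=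
  (sh hN v p.1, sh hN v p.2).

Lemma pm_inj N (hN : 0 < N) v : injective (pm hN v).
Proof.
move=> [a1 a2] [b1 b2] h.
have h1 : sh hN v a1 = sh hN v b1 := congr1 fst h.
have h2 : sh hN v a2 = sh hN v b2 := congr1 snd h.
by rewrite (sh_inj h1) (sh_inj h2).
Qed.

Lemma npairs_T N (hN : 0 < N) c s : npairs (T hN c s) = npairs s.
Proof.
rewrite /npairs.
have -> : [set p : site N * site N | [&& p.1 \in T hN c s, p.2 \in T hN c s & nn p.1 p.2]]
  = pm hN (cv c) @: [set p : site N * site N | [&& p.1 \in s, p.2 \in s & nn p.1 p.2]].
  apply/setP => p.
  have e : p = pm hN (cv c) (pm hN (cinv c) p) by case: p => a b; rewrite /pm /= !shK'.
  rewrite {2}e (mem_imset _ _ (@pm_inj _ hN _)).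
  rewrite !inE /pm /= !memT.
  by rewrite nn_sh.
by rewrite (card_imset _ (@pm_inj _ hN _)).
Qed.

Lemma Ham_T U N (hN : 0 < N) c s : Ham U (T hN c s) = Ham U s.
Proof. by rewrite /Ham npairs_T. Qed.

Lemma cardI_T N (hN : 0 < N) L c s (x : site N) :
  #|T hN c s :&: box N L (sh hN (cv c) x).1 (sh hN (cv c) x).2| = #|s :&: box N L x.1 x.2|.
Proof.
have -> : T hN c s :&: box N L (sh hN (cv c) x).1 (sh hN (cv c) x).2 =
          sh hN (cv c) @: (s :&: box N L x.1 x.2).
  apply/setP => y; rewrite -(shK' hN c y) (mem_imset _ _ (@sh_inj _ hN _)).
  by rewrite !in_setI memT' box_sh.
by rewrite (card_imset _ (@sh_inj _ hN _)).
Qed.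

Lemma Sset_T U Delta N (hN : 0 < N) L n c s :
  (T hN c s \in Sset U Delta N L n) = (s \in Sset U Delta N L n).
Proof.
rewrite /Sset !inE card_T; congr (_ && _).
apply/forallP/forallP => h x.
  by have := h (sh hN (cv c) x); rewrite cardI_T.
by rewrite -(shK' hN c x) cardI_T.
Qed.

Lemma TI_box N (hN : 0 < N) L c s (x : site N) :
  T hN c s :&: box N L (sh hN (cv c) x).1 (sh hN (cv c) x).2 =
          sh hN (cv c) @: (s :&: box N L x.1 x.2).
Proof.
  apply/setP => y; rewrite -(shK' hN c y) (mem_imset _ _ (@sh_inj _ hN _)).
  by rewrite !in_setI memT' box_sh.
Qed.

Lemma hit_T N (hN : 0 < N) L (c : site N) s :
  (T hN c s :&: box N L c.1 c.2 == set0) = (s :&: box N L 0 0 == set0).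
Proof.
pose o : site N := (Ordinal hN, Ordinal hN).
have ec : c = sh hN (cv c) o.
  case: c => a b; rewrite /sh /o /cv /=; congr pair; apply: val_inj => /=;
   by rewrite add0n modn_small.
rewrite {2 3}ec TI_box imset_eq0 /o /=.
reflexivity.
Qed.


Lemma RplusA : associative Rplus. Proof. move=> x y z; by rewrite Rplus_assoc. Qed.
HB.instance Definition _ := Monoid.isComLaw.Build R 0%R Rplus RplusA Rplus_comm Rplus_0_l.

Lemma bigR_le (I : finType) (P : pred I) (F G : I -> R) :
  (forall i, P i -> (F i <= G i)%R) ->
  (\big[Rplus/0%R]_(i | P i) F i <= \big[Rplus/0%R]_(i | P i) G i)%R.
Proof.
move=> h; elim/big_rec2: _ => [|i x y Pi hxy]; first exact: Rle_refl.
apply: Rplus_le_compat => //; exact: h.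
Qed.

Lemma bigR_ge0 (I : finType) (P : pred I) (F : I -> R) :
  (forall i, P i -> (0 <= F i)%R) -> (0 <= \big[Rplus/0%R]_(i | P i) F i)%R.
Proof.
move=> h; elim/big_rec: _ => [|i x Pi hx]; first exact: Rle_refl.
have := h i Pi; lra.
Qed.

Lemma bigR_mulr (I : finType) (P : pred I) (F : I -> R) c :
  \big[Rplus/0%R]_(i | P i) (F i * c)%R = (\big[Rplus/0%R]_(i | P i) F i * c)%R.
Proof.
elim/big_rec2: _ => [|i x y Pi ->]; first by rewrite Rmult_0_l.
by rewrite Rmult_plus_distr_r.
Qed.

Lemma bigR_const (I : finType) (P : pred I) c :
  \big[Rplus/0%R]_(i | P i) c = (INR #|[set i | P i]| * c)%R.
Proof.
rewrite (eq_bigl (fun i => i \in [set i | P i])); last by move=> i; rewrite inE.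
rewrite big_const.
elim: #|_| => [|k IH]; first by rewrite /= Rmult_0_l.
rewrite S_INR Rmult_plus_distr_r -IH /=; ring.
Qed.

Definition Wt (beta U : R) N (s : {set site N}) : R := exp (- beta * Ham U s).

Definition Esum beta U Delta N L n (c : site N) : R :=
  \big[Rplus/0%R]_(s | (s \in Sset U Delta N L n) && (#|s| == n) &&
                       (s :&: box N L c.1 c.2 != set0)) Wt beta U s.

Definition E0sum beta U Delta N L n : R :=
  \big[Rplus/0%R]_(s | (s \in Sset U Delta N L n) && (#|s| == n) &&
                       (s :&: box N L 0 0 != set0)) Wt beta U s.

Lemma E_trans beta U Delta N L n (hN : 0 < N) c :
  @Esum beta U Delta N L n c = E0sum beta U Delta N L n.
Proof.
rewrite /Esum (reindex_inj (@T_inj N hN c)); apply: eq_big => s.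
  by rewrite Sset_T card_T hit_T.
by move=> _; rewrite /Wt Ham_T.
Qed.

Definition Kb L := ((L - 1)./2).+1.*2 * ((L - 1)./2).+1.*2.

Definition Asum beta U Delta N L n : R :=
  \big[Rplus/0%R]_(s | (s \in Sset U Delta N L n) && (#|s| == n)) @Wt beta U N s.

Lemma sum_ineq beta U Delta N L n (hN : 0 < N) :
  (INR (N * N) * E0sum beta U Delta N L n <= INR (n * Kb L) * Asum beta U Delta N L n)%R.
Proof.
have e1 : \big[Rplus/0%R]_(c : site N) @Esum beta U Delta N L n c =
          (INR (N * N) * E0sum beta U Delta N L n)%R.
  rewrite (eq_bigr (fun _ => E0sum beta U Delta N L n)); last by move=> c _; apply: E_trans.
  rewrite bigR_const; congr (INR _ * _)%R.
  have -> : #|[set i : site N | true]| = #|site N| by apply: eq_card => i; rewrite inE.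
  by rewrite card_prod card_ord.
rewrite -e1 /Esum.
rewrite (eq_bigr (fun c : site N => \big[Rplus/0%R]_(s | (s \in Sset U Delta N L n) && (#|s| == n))
     (if s :&: box N L c.1 c.2 != set0 then Wt beta U s else 0%R))); last first.
  by move=> c _; rewrite big_mkcondr.
rewrite exchange_big /Asum (Rmult_comm (INR _)) -bigR_mulr /=.
apply: bigR_le => s /andP [_ /eqP hs].
rewrite -big_mkcond bigR_const Rmult_comm.
apply: Rmult_le_compat_l; first by apply: Rlt_le; apply: exp_pos.
apply: le_INR; apply/leP; rewrite -hs; exact: card_hit.
Qed.

Lemma Wt_pos beta U N (s : {set site N}) : (0 < Wt beta U s)%R.
Proof. exact: exp_pos. Qed.

Lemma mem_Scheck0 U Delta N L n (s : {set site N}) :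
  (s \in Scheck0 U Delta N L n) = (s \in Sset U Delta N L n) && (s :&: box N L 0 0 == set0).
Proof. rewrite /Scheck0 in_set. reflexivity. Qed.

Lemma ratio_bounds beta U Delta N L n (hN : 0 < N) (s0 : {set site N}) :
  s0 \in Sset U Delta N L n ->
  let r := (gibbs beta U n (Scheck0 U Delta N L n) / gibbs beta U n (Sset U Delta N L n))%R in
  (1 - INR (n * Kb L) / INR (N * N) <= r <= 1)%R.
Proof.
move=> hs0 r.
have hs0n : #|s0| == n by move: hs0; rewrite inE => /andP [].
set Z := (\big[Rplus/0%R]_(s : {set site N} | #|s| == n) exp (- beta * Ham U s))%R.
have Zpos : (0 < Z)%R.
  rewrite /Z (bigD1 s0) //=; apply: Rplus_lt_le_0_compat; first exact: exp_pos.
  apply: bigR_ge0 => s _; apply: Rlt_le; exact: exp_pos.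
set A := Asum beta U Delta N L n.
set E := E0sum beta U Delta N L n.
have Apos : (0 < A)%R.
  rewrite /A /Asum (bigD1 s0) /=; last by rewrite hs0 hs0n.
  apply: Rplus_lt_le_0_compat; first exact: Wt_pos.
  apply: bigR_ge0 => s _; apply: Rlt_le; exact: Wt_pos.
have Epos : (0 <= E)%R by apply: bigR_ge0 => s _; apply: Rlt_le; exact: Wt_pos.
have gS : gibbs beta U n (Sset U Delta N L n) = (A / Z)%R.
  by rewrite /gibbs /A /Asum.
have gC : gibbs beta U n (Scheck0 U Delta N L n) = ((A - E) / Z)%R.
  rewrite /gibbs; congr (_ / _)%R.
  have hsplit : (A = \big[Rplus/0%R]_(s in Scheck0 U Delta N L n | #|s| == n)
                      exp (- beta * Ham U s) + E)%R.
    rewrite /A /Asum (bigID (fun s => s :&: box N L 0 0 == set0)) /=.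
    congr (_ + _)%R.
    apply: eq_bigl => s; rewrite mem_Scheck0.
    by rewrite -!andbA (andbC (#|s| == n)).
  rewrite hsplit; ring.
have hr : r = (1 - E / A)%R.
  rewrite /r gS gC; field; split; apply: Rgt_not_eq => //.
have ineq := sum_ineq beta U Delta L n hN.
have hNN : (0 < INR (N * N))%R.
  apply: lt_0_INR; apply/ltP; by rewrite muln_gt0 hN.
rewrite hr; split.
  apply: Rplus_le_compat_l; apply: Ropp_le_contravar.
  apply: (Rmult_le_reg_r (INR (N * N) * A)); first exact: Rmult_lt_0_compat.
  have -> : (E / A * (INR (N * N) * A) = INR (N * N) * E)%R by field; apply: Rgt_not_eq.
  have -> : (INR (n * Kb L) / INR (N * N) * (INR (N * N) * A) = INR (n * Kb L) * A)%R.
    by field; apply: Rgt_not_eq.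
  exact: ineq.
have : (0 <= E / A)%R by apply: Rmult_le_pos => //; apply: Rlt_le; apply: Rinv_0_lt_compat.
lra.
Qed.


Lemma INR_ceil x : (0 <= x)%R -> (INR (Z.to_nat (Rceil x)) <= x + 1)%R.
Proof.
move=> hx.
have [h1 _] := archimed (- x).
have hc : (IZR (Rceil x) < x + 1)%R by rewrite /Rceil minus_IZR; lra.
case E: (Rceil x) => [|p|p].
- simpl; lra.
- have := hc; rewrite E => hc'.
  rewrite INR_IZR_INZ Z2Nat.id; [lra|lia].
- simpl; lra.
Qed.

Lemma Kb_le L : odd L -> (Kb L <= 4 * (L * L))%nat.
Proof.
move=> hL.
have hL1 : (0 < L)%nat by rewrite lt0n; apply/eqP => h0; rewrite h0 in hL.
have h : (((L - 1)./2).+1.*2 <= L.*2)%nat.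
  rewrite -(addn1 ((L - 1)./2)) doubleD; set r := (L - 1)./2.
  have : (r.*2 <= L - 1)%nat by rewrite /r -{2}(odd_double_half (L - 1)) leq_addl.
  move/leP => h1; move/leP: hL1 => h2; apply/leP.
  rewrite -!mul2n in h1 *; rewrite -?plusE -?minusE -?multE in h1 *; lia.
rewrite /Kb; apply: leq_trans (leq_mul h h) _.
by rewrite -!mul2n mulnACA.
Qed.

Lemma odd_pos m : odd m -> (0 < m)%nat.
Proof. by rewrite lt0n; apply: contraTneq => ->. Qed.

Theorem lemmaB2 (U Delta : R) (N L : R -> nat) (delta : R -> R) :
  (0 < U)%R -> (U < Delta)%R -> (Delta < 2 * U)%R ->
  (forall k : nat, (U / (2 * U - Delta))%R <> INR k) ->
  (forall beta : R, (0 < beta)%R -> odd (N beta)) ->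
  (forall beta : R, (0 < beta)%R -> odd (L beta)) ->
  (forall beta : R, (0 < beta)%R ->
     (INR (L beta) ^ 2)%R = exp ((Delta - delta beta) * beta)%R) ->
  tends_to delta 0%R ->
  tends_to_infty (fun beta => (beta * delta beta)%R) ->
  tends_to_infty (fun beta => (INR (N beta * N beta) * exp (- beta * Delta))%R) ->
  tends_to (fun beta => (INR (N beta * N beta) * exp (- beta * Gamma U Delta))%R) 0%R ->
  tends_to
    (fun beta =>
       (gibbs beta U (nbeta Delta beta (N beta)) (Scheck0 U Delta (N beta) (L beta) (nbeta Delta beta (N beta)))
        / gibbs beta U (nbeta Delta beta (N beta)) (Sset U Delta (N beta) (L beta) (nbeta Delta beta (N beta))))%R)
    1%R.
Proof.
move=> hU hUD hD2U hnk hNodd hLodd hL2 hdelta hbd hNrho hGam eps heps.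
pose e' := Rmin eps 1.
have he' : (0 < e')%R by apply: Rmin_glb_lt => //; lra.
have he'1 : (e' <= eps)%R by apply: Rmin_l.
have he'2 : (e' <= 1)%R by apply: Rmin_r.
pose M := (16 / e')%R.
have hM : (0 < M)%R by rewrite /M; apply: Rdiv_lt_0_compat => //; lra.
case: (hbd M) => B1 hB1.
case: (hNrho 1%R) => B2 hB2.
exists (Rmax 0 (Rmax B1 B2)) => beta hb.
have hb0 : (0 < beta)%R by apply: Rle_lt_trans hb; apply: Rmax_l.
have hb1 : (B1 < beta)%R.
  apply: Rle_lt_trans hb; apply: Rle_trans (Rmax_r _ _); apply: Rmax_l.
have hb2 : (B2 < beta)%R.
  apply: Rle_lt_trans hb; apply: Rle_trans (Rmax_r _ _); apply: Rmax_r.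
have hbdM := hB1 beta hb1.
have hrho := hB2 beta hb2.
have hl2 := hL2 beta hb0.
have hNpos := odd_pos (hNodd beta hb0).
have hLodd' := hLodd beta hb0.
move: hbdM hrho hl2 hNpos hLodd'.
set Nb := N beta; set Lb := L beta; set db := delta beta.
move=> hbdM hrho hl2 hNpos hLodd'.
set n := nbeta Delta beta Nb.
pose rho := exp (- beta * Delta).
pose nn := INR (Nb * Nb).
have hnn : (0 < nn)%R by rewrite /nn; apply: lt_0_INR; apply/ltP; rewrite muln_gt0 hNpos.
have hrho0 : (0 < rho)%R by apply: exp_pos.
have ha : (INR n <= rho * nn + 1)%R.
  apply: INR_ceil; apply: Rmult_le_pos; [apply: Rlt_le; exact: hrho0|exact: Rlt_le].
have hrl : (rho * INR Lb ^ 2 = exp (- (beta * db)))%R.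
  rewrite hl2 /rho -exp_plus; congr exp; ring.
have hexp : (exp (- (beta * db)) < e' / 16)%R.
  have h1 := exp_ineq1 (beta * db) ltac:(lra).
  rewrite exp_Ropp.
  have hpos : (0 < exp (beta * db))%R by apply: exp_pos.
  have : (M < exp (beta * db))%R by lra.
  rewrite /M => hh.
  apply: (Rmult_lt_reg_l (exp (beta * db))) => //.
  rewrite Rinv_r; last lra.
  have : (16 / e' * (e' / 16) = 1)%R by field; lra.
  move=> h16.
  have : (16 / e' * (e' / 16) < exp (beta * db) * (e' / 16))%R.
    apply: Rmult_lt_compat_r => //; lra.
  lra.
have hl20 : (0 <= INR Lb ^ 2)%R by apply: pow2_ge_0.
have key : (INR n * INR Lb ^ 2 <= 2 * exp (- (beta * db)) * nn)%R.
  rewrite -hrl.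
  apply: Rle_trans (Rmult_le_compat_r _ _ _ hl20 ha) _.
  have : (1 <= rho * nn)%R by rewrite /rho /nn Rmult_comm; lra.
  move=> h1.
  have h2 := Rmult_le_compat_r _ _ _ hl20 h1.
  move: h2; set l2 := (INR Lb ^ 2)%R => h2.
  have -> : ((rho * nn + 1) * l2 = rho * nn * l2 + 1 * l2)%R by ring.
  have -> : (2 * (rho * l2) * nn = rho * nn * l2 + rho * nn * l2)%R by ring.
  lra.
have h4 : INR 4 = 4%R by simpl; ring.
have hK : (INR (n * Kb Lb) <= 4 * (INR n * INR Lb ^ 2))%R.
  rewrite mult_INR.
  have : (INR (Kb Lb) <= INR (4 * (Lb * Lb)))%R by apply: le_INR; apply/leP; exact: Kb_le.
  rewrite (mult_INR 4) mult_INR h4 => h.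
  have hn0 : (0 <= INR n)%R by apply: pos_INR.
  have := Rmult_le_compat_l _ _ _ hn0 h.
  move=> h'; apply: Rle_trans h' _; rewrite mult_INR; right; ring.
have hexpnn : (2 * exp (- (beta * db)) * nn < e' / 8 * nn)%R.
  apply: Rmult_lt_compat_r => //; lra.
have hQ : (INR (n * Kb Lb) < e' / 2 * nn)%R by lra.
have hfin : (4 * (INR n * INR Lb ^ 2) < INR (Nb * Nb))%R.
  have : (e' / 2 * nn <= nn)%R.
    have : (e' / 2 * nn <= 1 * nn)%R by apply: Rmult_le_compat_r; lra.
    lra.
  rewrite /nn in hexpnn key * => h; lra.
have hnat : (4 * n * (Lb * Lb) <= Nb * Nb)%nat.
  apply/leP; apply: INR_le.
  rewrite (mult_INR (4 * n)) (mult_INR 4) h4.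
  have -> : INR (Lb * Lb) = (INR Lb ^ 2)%R by rewrite mult_INR; ring.
  lra.
have [s0 [hs0 hs0b]] := S_exists (odd_pos hLodd') hnat.
have hs0S : s0 \in Sset U Delta Nb Lb n.
  rewrite inE; apply/andP; split; first by apply/eqP.
  apply/forallP => x; apply: leq_trans (hs0b x) _; by rewrite addn1.
have [hr1 hr2] := ratio_bounds beta hNpos hs0S.
set r := (X in (1 - _ <= X)%R) in hr1 hr2 *.
have hQ' : (INR (n * Kb Lb) / nn < e' / 2)%R.
  apply: (Rmult_lt_reg_r nn) => //.
  rewrite /Rdiv Rmult_assoc Rinv_l; lra.
rewrite /nn in hQ'.
rewrite /r in hr1; rewrite Rabs_left1; lra.
Qed.
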